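(* Consider a liquid ($l$), its vapor ($v$) and a gas ($g$), each with extensive entropy $S_k$ of $(M_k,V_k,E_k)$ that is concave, positively homogeneous of degree 1, upper semi-continuous, with non-empty closed convex domain, and $\mathcal C^2$ with $\partial S_k/\partial E>0$; let $s_k(\tau,e)=S_k(1,\tau,e)$, $1/T_k=\partial_e s_k$, $p_k/T_k=\partial_\tau s_k$. Fix the gas mass fraction $\varphi_g\in[0,1]$ and define, for $\tau,e>0$, $$s_{PT}(\tau,e,\varphi_g)=\max\Big\{\sum_{k}\varphi_k s_k(\tau_k,e_k)\ :\ \varphi_l+\varphi_v=1-\varphi_g,\ e=\sum_k\varphi_ke_k,\ \tau=\varphi_l\tau_l+\varphi_g\tau_g,\ \varphi_v\tau_v=\varphi_g\tau_g\Big\},$$ the maximum being over $\varphi_l,\varphi_v\ge0$ and $(\tau_k,e_k)_k$, and assume it is attained at an interior point, at which the phases have a common temperature $T=T_l=T_g=T_v$ and the mixture pressure is $p=p_l=p_g+p_v$. Then $s_{PT}$ depends only on $(\tau,e)$ and satisfies $T\,ds_{PT}=de+p\,d\tau$ (i.e. $\partial_e s_{PT}=1/T$, $\partial_\tau s_{PT}=p/T$), where $T$ and $p$ are the mixture temperature and pressure at equilibrium.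
   Context: $\varphi_k$, $\tau_k$, $e_k$ are the mass fraction, specific volume and specific internal energy of phase $k$; vapor and gas occupy the same volume ($\varphi_v\tau_v=\varphi_g\tau_g$) while the liquid occupies a separate volume; mass transfer is allowed between liquid and vapor only. *)

(* Defs.v *)
From Stdlib Require Import Reals Lra.
From Coquelicot Require Import Coquelicot.
Open Scope R_scope.

(* ---------- Extensive entropies S(M,V,E) with domain D ⊆ R^3 ----------
   An extended-valued entropy S : R^3 -> R ∪ {-oo} is represented by its
   domain D (where S > -oo) and its (real) values on D. *)

Definition near3 (d : R) (x1 x2 x3 y1 y2 y3 : R) : Prop :=
  Rabs (y1 - x1) < d /\ Rabs (y2 - x2) < d /\ Rabs (y3 - x3) < d.

Definition interior3 (D : R -> R -> R -> Prop) (x1 x2 x3 : R) : Prop :=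
  exists d, 0 < d /\ forall y1 y2 y3, near3 d x1 x2 x3 y1 y2 y3 -> D y1 y2 y3.

Definition closed3 (D : R -> R -> R -> Prop) : Prop :=
  forall x1 x2 x3, ~ D x1 x2 x3 ->
    exists d, 0 < d /\ forall y1 y2 y3, near3 d x1 x2 x3 y1 y2 y3 -> ~ D y1 y2 y3.

Definition convex3 (D : R -> R -> R -> Prop) : Prop :=
  forall x1 x2 x3 y1 y2 y3 l, 0 <= l <= 1 -> D x1 x2 x3 -> D y1 y2 y3 ->
    D (l * x1 + (1 - l) * y1) (l * x2 + (1 - l) * y2) (l * x3 + (1 - l) * y3).

Definition concave_on3 (S : R -> R -> R -> R) (D : R -> R -> R -> Prop) : Prop :=
  forall x1 x2 x3 y1 y2 y3 l, 0 <= l <= 1 -> D x1 x2 x3 -> D y1 y2 y3 ->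
    l * S x1 x2 x3 + (1 - l) * S y1 y2 y3 <=
    S (l * x1 + (1 - l) * y1) (l * x2 + (1 - l) * y2) (l * x3 + (1 - l) * y3).

Definition pos_homogeneous3 (S : R -> R -> R -> R) (D : R -> R -> R -> Prop) : Prop :=
  forall l x1 x2 x3, 0 < l -> D x1 x2 x3 ->
    D (l * x1) (l * x2) (l * x3) /\ S (l * x1) (l * x2) (l * x3) = l * S x1 x2 x3.

(* upper semicontinuity of the extended function; since D is closed this
   amounts to upper semicontinuity of S restricted to D *)
Definition usc_on3 (S : R -> R -> R -> R) (D : R -> R -> R -> Prop) : Prop :=
  forall x1 x2 x3, D x1 x2 x3 -> forall eps, 0 < eps ->
    exists d, 0 < d /\ forall y1 y2 y3, D y1 y2 y3 -> near3 d x1 x2 x3 y1 y2 y3 ->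
      S y1 y2 y3 < S x1 x2 x3 + eps.

(* partial derivatives: i = 0 -> M, i = 1 -> V, i = 2 -> E *)
Definition pd (i : nat) (f : R -> R -> R -> R) : R -> R -> R -> R :=
  match i with
  | O => fun x1 x2 x3 => Derive (fun t => f t x2 x3) x1
  | 1%nat => fun x1 x2 x3 => Derive (fun t => f x1 t x3) x2
  | _ => fun x1 x2 x3 => Derive (fun t => f x1 x2 t) x3
  end.

Definition ex_pd (i : nat) (f : R -> R -> R -> R) (x1 x2 x3 : R) : Prop :=
  match i with
  | O => ex_derive (fun t => f t x2 x3) x1
  | 1%nat => ex_derive (fun t => f x1 t x3) x2
  | _ => ex_derive (fun t => f x1 x2 t) x3
  end.

Definition continuous_on3 (f : R -> R -> R -> R) (U : R -> R -> R -> Prop) : Prop :=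
  forall x1 x2 x3, U x1 x2 x3 -> forall eps, 0 < eps ->
    exists d, 0 < d /\ forall y1 y2 y3, U y1 y2 y3 -> near3 d x1 x2 x3 y1 y2 y3 ->
      Rabs (f y1 y2 y3 - f x1 x2 x3) < eps.

(* C^2 on an open set U: all first and second partial derivatives exist on U
   and all second partial derivatives are continuous on U (which implies that
   f is twice continuously differentiable on U). *)
Definition C2_on3 (f : R -> R -> R -> R) (U : R -> R -> R -> Prop) : Prop :=
  forall i j, (i < 3)%nat -> (j < 3)%nat ->
    (forall x1 x2 x3, U x1 x2 x3 -> ex_pd i f x1 x2 x3 /\ ex_pd j (pd i f) x1 x2 x3)
    /\ continuous_on3 (pd j (pd i f)) U.

Definition phase_entropy (S : R -> R -> R -> R) (D : R -> R -> R -> Prop) : Prop :=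
  (exists x1 x2 x3, D x1 x2 x3) /\ closed3 D /\ convex3 D /\
  concave_on3 S D /\ pos_homogeneous3 S D /\ usc_on3 S D /\
  C2_on3 S (interior3 D) /\
  (forall x1 x2 x3, interior3 D x1 x2 x3 -> 0 < pd 2 S x1 x2 x3).

Definition spec (S : R -> R -> R -> R) (tau e : R) : R := S 1 tau e.
Definition temperature (S : R -> R -> R -> R) (tau e : R) : R :=
  / Derive (fun e' => spec S tau e') e.
Definition pressure (S : R -> R -> R -> R) (tau e : R) : R :=
  temperature S tau e * Derive (fun t => spec S t e) tau.

Record config := mkConfig {
  phl : R; phv : R;
  taul : R; el : R; tauv : R; ev : R; taug : R; eg : R }.

Definition feasible (Dl Dv Dg : R -> R -> R -> Prop) (phg tau e : R) (c : config) : Prop :=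
  0 <= phl c /\ 0 <= phv c /\ phl c + phv c = 1 - phg /\
  e = phl c * el c + phv c * ev c + phg * eg c /\
  tau = phl c * taul c + phg * taug c /\
  phv c * tauv c = phg * taug c /\
  Dl 1 (taul c) (el c) /\ Dv 1 (tauv c) (ev c) /\ Dg 1 (taug c) (eg c).

Definition mix_value (Sl Sv Sg : R -> R -> R -> R) (phg : R) (c : config) : R :=
  phl c * spec Sl (taul c) (el c) + phv c * spec Sv (tauv c) (ev c)
  + phg * spec Sg (taug c) (eg c).

(* s_PT(tau,e,phg) := sup of the mixture entropy over feasible configurations,
   as an extended real (-oo if infeasible). *)
Definition sPT (Sl Sv Sg : R -> R -> R -> R) (Dl Dv Dg : R -> R -> R -> Prop)
  (phg tau e : R) : Rbar :=
  Lub_Rbar (fun x => exists c, feasible Dl Dv Dg phg tau e c /\ x = mix_value Sl Sv Sg phg c).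

(* Main.v *)
Require Import Defs.
From Stdlib Require Import Reals Lra Lia.
From Coquelicot Require Import Coquelicot.
Open Scope R_scope.

Lemma combine (S : R->R->R->R) (D : R->R->R->Prop) m1 t1 e1 m2 t2 e2 :
  convex3 D -> concave_on3 S D -> 0 <= m1 -> 0 <= m2 -> D 1 t1 e1 -> D 1 t2 e2 ->
  exists t e0, D 1 t e0 /\ (m1+m2)/2 * t = (m1*t1 + m2*t2)/2 /\
    (m1+m2)/2 * e0 = (m1*e1+m2*e2)/2 /\
    (m1 * spec S t1 e1 + m2 * spec S t2 e2)/2 <= (m1+m2)/2 * spec S t e0.
Proof.
  intros Hcv Hcc H1 H2 D1 D2.
  destruct (Req_dec (m1+m2) 0) as [Hz|Hnz].
  - assert (m1 = 0) by lra; assert (m2 = 0) by lra; subst.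
    exists t1, e1. repeat split; try assumption; lra.
  - assert (Hp : 0 < m1 + m2) by lra.
    set (l := m1 / (m1 + m2)).
    assert (Hlm : l * (m1 + m2) = m1) by (unfold l; field; lra).
    assert (Hl : 0 <= l <= 1) by (split; nra).
    pose proof (Hcv 1 t1 e1 1 t2 e2 l Hl D1 D2) as Hd.
    pose proof (Hcc 1 t1 e1 1 t2 e2 l Hl D1 D2) as Hs.
    replace (l*1+(1-l)*1) with 1 in Hd, Hs by ring.
    exists (l*t1+(1-l)*t2), (l*e1+(1-l)*e2). split; [exact Hd|].
    unfold spec. split; [|split].
    + unfold l; field; lra.
    + unfold l; field; lra.
    + apply Rle_trans with ((m1+m2)/2 * (l * S 1 t1 e1 + (1-l) * S 1 t2 e2)).
      * right; unfold l; field; lra.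
      * apply Rmult_le_compat_l; lra.
Qed.

Lemma midpoint Sl Sv Sg Dl Dv Dg phg t1 e1 t2 e2 c1 c2 tm em :
  convex3 Dl -> concave_on3 Sl Dl -> convex3 Dv -> concave_on3 Sv Dv ->
  convex3 Dg -> concave_on3 Sg Dg -> 0 <= phg ->
  tm = (t1+t2)/2 -> em = (e1+e2)/2 ->
  feasible Dl Dv Dg phg t1 e1 c1 -> feasible Dl Dv Dg phg t2 e2 c2 ->
  exists c, feasible Dl Dv Dg phg tm em c /\
    (mix_value Sl Sv Sg phg c1 + mix_value Sl Sv Sg phg c2)/2 <= mix_value Sl Sv Sg phg c.
Proof.
  intros cl ccl cv ccv cg ccg Hg Htm Hem F1 F2.
  destruct F1 as (a1 & b1 & s1 & E1 & T1 & V1 & Dl1 & Dv1 & Dg1).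
  destruct F2 as (a2 & b2 & s2 & E2 & T2 & V2 & Dl2 & Dv2 & Dg2).
  destruct (combine Sl Dl (phl c1) (taul c1) (el c1) (phl c2) (taul c2) (el c2) cl ccl a1 a2 Dl1 Dl2)
    as (tl & elx & Dlx & Htl & Hel & Hsl).
  destruct (combine Sv Dv (phv c1) (tauv c1) (ev c1) (phv c2) (tauv c2) (ev c2) cv ccv b1 b2 Dv1 Dv2)
    as (tv & evx & Dvx & Htv & Hev & Hsv).
  destruct (combine Sg Dg phg (taug c1) (eg c1) phg (taug c2) (eg c2) cg ccg Hg Hg Dg1 Dg2)
    as (tg & egx & Dgx & Htg & Heg & Hsg).
  assert (Hpg : (phg+phg)/2 = phg) by field.
  rewrite Hpg in Htg, Heg, Hsg.
  exists (mkConfig ((phl c1 + phl c2)/2) ((phv c1+phv c2)/2) tl elx tv evx tg egx).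
  unfold feasible, mix_value; simpl. subst tm em.
  split; [repeat split; try assumption; lra|].
  unfold mix_value. lra.
Qed.

Lemma lub_bounds (E : R -> Prop) x0 M : E x0 -> (forall x, E x -> x <= M) ->
  is_finite (Lub_Rbar E) /\ x0 <= real (Lub_Rbar E) <= M.
Proof.
  intros H0 HM. destruct (Lub_Rbar_correct E) as [Hub Hlst].
  assert (A := Hub x0 H0).
  assert (B : Rbar_le (Lub_Rbar E) M).
  { apply Hlst. intros x Hx. simpl. apply HM; exact Hx. }
  destruct (Lub_Rbar E); simpl in *; try contradiction.
  split; [reflexivity|]; lra.
Qed.

Lemma squeeze (f g : R -> R) x0 L d : 0 < d -> derivable_pt_lim g 0 L ->
  (forall h, Rabs h < d -> g h <= f (x0 + h) <= 2 * g 0 - g (- h)) ->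
  derivable_pt_lim f x0 L.
Proof.
  intros Hd Hg Hb.
  assert (Hf0 : f x0 = g 0).
  { destruct (Hb 0) as [A B]. rewrite Rabs_R0; lra.
    rewrite Rplus_0_r in A, B. rewrite Ropp_0 in B. lra. }
  intros eps Heps. destruct (Hg eps Heps) as [dg Hdg].
  assert (Hmin : 0 < Rmin d dg) by (apply Rmin_pos; [lra | apply cond_pos]).
  exists (mkposreal _ Hmin). intros h Hh0 Hh. simpl in Hh.
  assert (Hh1 : Rabs h < d) by (apply Rlt_le_trans with (1 := Hh); apply Rmin_l).
  assert (Hh2 : Rabs h < dg) by (apply Rlt_le_trans with (1 := Hh); apply Rmin_r).
  assert (Ha := Hdg h Hh0 Hh2).
  assert (Hbm : Rabs (- h) < dg) by (rewrite Rabs_Ropp; exact Hh2).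
  assert (Hb' := Hdg (- h) ltac:(intro; apply Hh0; lra) Hbm).
  rewrite !Rplus_0_l in Ha, Hb'.
  destruct (Hb h Hh1) as [B1 B2].
  set (a := (g h - g 0) / h - L) in *.
  set (b := (g (- h) - g 0) / - h - L) in *.
  set (q := (f (x0 + h) - f x0) / h - L).
  assert (Ea : g h - g 0 = (a + L) * h) by (unfold a; field; exact Hh0).
  assert (Eb : g (- h) - g 0 = (b + L) * (- h)) by (unfold b; field; exact Hh0).
  assert (Eq : f (x0 + h) - f x0 = (q + L) * h) by (unfold q; field; exact Hh0).
  fold q.
  apply Rabs_def2 in Ha. apply Rabs_def2 in Hb'.
  apply Rabs_def1.
  - destruct (Rlt_or_le 0 h) as [Hp|Hn]; [|assert (h < 0) by (destruct Hn; [lra| contradiction])]; nra.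
  - destruct (Rlt_or_le 0 h) as [Hp|Hn]; [|assert (h < 0) by (destruct Hn; [lra| contradiction])]; nra.
Qed.

Lemma deriv_affine (F : R -> R) x0 m K D : m <> 0 -> is_derive F x0 D ->
  is_derive (fun b => m * F (x0 + b / m) + K) 0 D.
Proof.
  intros Hm HF.
  assert (H1 : is_derive (fun b => x0 + b / m) 0 (/ m)) by (auto_derive; [trivial | field; exact Hm]).
  assert (E0 : x0 + 0 / m = x0) by (field; exact Hm).
  assert (HF' : is_derive F (x0 + 0 / m) D) by (rewrite E0; exact HF).
  pose proof (is_derive_comp F (fun b => x0 + b / m) 0 D (/ m) HF' H1) as H2.
  pose proof (is_derive_scal _ _ m _ H2) as H3.
  pose proof (is_derive_plus _ (fun _ => K) 0 _ _ H3 (is_derive_const K 0)) as H4.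
  simpl in H4.
  replace D with (plus (m * scal (/ m) D) zero).
  - exact H4.
  - unfold plus, zero, scal; simpl. unfold mult; simpl. rewrite Rplus_0_r, <- Rmult_assoc, Rinv_r, Rmult_1_l; [reflexivity | exact Hm].
Qed.

Definition pert (c : config) (a b : R) : config :=
  mkConfig (phl c) (phv c) (taul c + a / phl c) (el c + b / phl c)
    (tauv c) (ev c) (taug c) (eg c).

Theorem proposition2p5
  (Sl Sv Sg : R -> R -> R -> R) (Dl Dv Dg : R -> R -> R -> Prop)
  (phg tau e : R) (c : config) (T p : R) :
  phase_entropy Sl Dl -> phase_entropy Sv Dv -> phase_entropy Sg Dg ->
  0 <= phg <= 1 -> 0 < tau -> 0 < e ->
  (* the maximum is attained at c *)
  feasible Dl Dv Dg phg tau e c ->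
  (forall c', feasible Dl Dv Dg phg tau e c' ->
     mix_value Sl Sv Sg phg c' <= mix_value Sl Sv Sg phg c) ->
  (* c is an interior point *)
  0 < phl c -> 0 < phv c ->
  interior3 Dl 1 (taul c) (el c) ->
  interior3 Dv 1 (tauv c) (ev c) ->
  interior3 Dg 1 (taug c) (eg c) ->
  (* common temperature T and mixture pressure p at c *)
  temperature Sl (taul c) (el c) = T ->
  temperature Sg (taug c) (eg c) = T ->
  temperature Sv (tauv c) (ev c) = T ->
  pressure Sl (taul c) (el c) = p ->
  pressure Sg (taug c) (eg c) + pressure Sv (tauv c) (ev c) = p ->
  (* conclusion: s_PT is finite near (tau,e) and T ds_PT = de + p dtau *)
  (exists d, 0 < d /\ forall tau' e', Rabs (tau' - tau) < d -> Rabs (e' - e) < d ->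
      is_finite (sPT Sl Sv Sg Dl Dv Dg phg tau' e')) /\
  is_derive (fun e' => real (sPT Sl Sv Sg Dl Dv Dg phg tau e')) e (/ T) /\
  is_derive (fun t => real (sPT Sl Sv Sg Dl Dv Dg phg t e)) tau (p / T).
Proof.
  intros PL PV PG Hphg Htau He Hfeas Hmax Hphl Hphv Hil Hiv Hig HTl HTg HTv Hpl Hpgv.
  destruct PL as (_ & _ & cvl & ccl & _ & _ & C2l & Pl).
  destruct PV as (_ & _ & cvv & ccv & _ & _ & _ & _).
  destruct PG as (_ & _ & cvg & ccg & _ & _ & _ & _).
  pose proof Hil as Hil'.
  destruct Hil as [d [Hd Hnear]].
  set (dl := d * phl c).
  assert (Hdl : 0 < dl) by (unfold dl; nra).
  assert (Hpf : forall a b, Rabs a < dl -> Rabs b < dl ->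
            feasible Dl Dv Dg phg (tau + a) (e + b) (pert c a b)).
  { intros a b Ha Hb.
    destruct Hfeas as (a1 & b1 & s1 & E1 & T1 & V1 & Dl1 & Dv1 & Dg1).
    unfold feasible, pert; simpl.
    repeat split; try assumption.
    - rewrite E1; field; lra.
    - rewrite T1; field; lra.
    - apply Hnear. unfold near3.
      apply Rabs_def2 in Ha. apply Rabs_def2 in Hb.
      split; [replace (1 - 1) with 0 by ring; rewrite Rabs_R0; lra|].
      split.
      + replace (taul c + a / phl c - taul c) with (a / phl c) by ring.
        set (q := a / phl c). assert (q * phl c = a) by (unfold q; field; lra).
        unfold dl in Ha. apply Rabs_def1; nra.
      + replace (el c + b / phl c - el c) with (b / phl c) by ring.
        set (q := b / phl c). assert (q * phl c = b) by (unfold q; field; lra).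
        unfold dl in Hb. apply Rabs_def1; nra. }
  assert (Hp00 : mix_value Sl Sv Sg phg (pert c 0 0) = mix_value Sl Sv Sg phg c).
  { unfold mix_value, pert; simpl.
    replace (0 / phl c) with 0 by (field; lra). rewrite !Rplus_0_r. reflexivity. }
  assert (Hbnd : forall t' e', Rabs (t' - tau) < dl -> Rabs (e' - e) < dl ->
     is_finite (sPT Sl Sv Sg Dl Dv Dg phg t' e') /\
     mix_value Sl Sv Sg phg (pert c (t' - tau) (e' - e))
       <= real (sPT Sl Sv Sg Dl Dv Dg phg t' e')
       <= 2 * mix_value Sl Sv Sg phg c - mix_value Sl Sv Sg phg (pert c (tau - t') (e - e'))).
  { intros t' e' Ht He'.
    unfold sPT. apply lub_bounds.
    - exists (pert c (t' - tau) (e' - e)). split; [|reflexivity].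
      pose proof (Hpf _ _ Ht He') as F.
      replace (tau + (t' - tau)) with t' in F by ring.
      replace (e + (e' - e)) with e' in F by ring. exact F.
    - intros x [c' [Fc' ->]].
      assert (Ht2 : Rabs (tau - t') < dl) by (rewrite Rabs_minus_sym; exact Ht).
      assert (He2 : Rabs (e - e') < dl) by (rewrite Rabs_minus_sym; exact He').
      pose proof (Hpf _ _ Ht2 He2) as F2.
      destruct (midpoint Sl Sv Sg Dl Dv Dg phg t' e' (tau + (tau - t')) (e + (e - e'))
                  c' (pert c (tau - t') (e - e')) tau e cvl ccl cvv ccv cvg ccg
                  ltac:(lra) ltac:(field) ltac:(field) Fc' F2) as [cm [Fm Hm]].
      pose proof (Hmax cm Fm). lra. }
  destruct (C2l 2%nat 0%nat ltac:(lia) ltac:(lia)) as [C2a _].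
  destruct (C2a 1 (taul c) (el c) Hil') as [Exe _].
  destruct (C2l 1%nat 0%nat ltac:(lia) ltac:(lia)) as [C2b _].
  destruct (C2b 1 (taul c) (el c) Hil') as [Ext _].
  simpl in Exe, Ext.
  pose proof (Pl 1 (taul c) (el c) Hil') as Hpos. simpl in Hpos.
  set (De := Derive (fun t => Sl 1 (taul c) t) (el c)) in *.
  set (Dt := Derive (fun t => Sl 1 t (el c)) (taul c)) in *.
  assert (HT : T = / De) by (rewrite <- HTl; reflexivity).
  assert (HP : p = T * Dt) by (rewrite <- Hpl, <- HTl; reflexivity).
  assert (Z : 0 / phl c = 0) by (field; lra).
  split; [|split].
  - exists dl. split; [exact Hdl|]. intros t' e' H1 H2. apply (Hbnd t' e' H1 H2).
  - replace (/ T) with De by (rewrite HT; field; lra).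
    apply is_derive_Reals.
    apply (squeeze _ (fun b => mix_value Sl Sv Sg phg (pert c 0 b)) e De dl Hdl).
    + apply is_derive_Reals.
      eapply is_derive_ext; [| apply (deriv_affine (fun x => Sl 1 (taul c) x) (el c) (phl c)
          (phv c * spec Sv (tauv c) (ev c) + phg * spec Sg (taug c) (eg c)) De ltac:(lra))].
      * intros t. unfold mix_value, pert, spec; simpl. rewrite Z, Rplus_0_r. ring.
      * apply Derive_correct. exact Exe.
    + intros h Hh. simpl.
      assert (A : Rabs (tau - tau) < dl) by (replace (tau - tau) with 0 by ring; rewrite Rabs_R0; lra).
      assert (B : Rabs (e + h - e) < dl) by (replace (e + h - e) with h by ring; exact Hh).
      destruct (Hbnd tau (e + h) A B) as [_ [L U]].
      replace (tau - tau) with 0 in L, U by ring.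
      replace (e + h - e) with h in L by ring.
      replace (e - (e + h)) with (- h) in U by ring.
      rewrite Hp00. lra.
  - replace (p / T) with Dt by (rewrite HP, HT; field; lra).
    apply is_derive_Reals.
    apply (squeeze _ (fun a => mix_value Sl Sv Sg phg (pert c a 0)) tau Dt dl Hdl).
    + apply is_derive_Reals.
      eapply is_derive_ext; [| apply (deriv_affine (fun x => Sl 1 x (el c)) (taul c) (phl c)
          (phv c * spec Sv (tauv c) (ev c) + phg * spec Sg (taug c) (eg c)) Dt ltac:(lra))].
      * intros t. unfold mix_value, pert, spec; simpl. rewrite Z, Rplus_0_r. ring.
      * apply Derive_correct. exact Ext.
    + intros h Hh. simpl.
      assert (A : Rabs (e - e) < dl) by (replace (e - e) with 0 by ring; rewrite Rabs_R0; lra).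
      assert (B : Rabs (tau + h - tau) < dl) by (replace (tau + h - tau) with h by ring; exact Hh).
      destruct (Hbnd (tau + h) e B A) as [_ [L U]].
      replace (e - e) with 0 in L, U by ring.
      replace (tau + h - tau) with h in L by ring.
      replace (tau - (tau + h)) with (- h) in U by ring.
      rewrite Hp00. lra.
Qed.
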